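(* Let $X$ be a normed space, $1\le r<\infty$, $T>0$, and $a:[0,T]\to X$ continuously differentiable. Then $$\hat V^r(a(t))_{t\in[0,T]}\le 8\,\|a\|_{L^r([0,T];X)}^{1-1/r}\,\|a'\|_{L^r([0,T];X)}^{1/r}.$$
   Context: For a family $(a_t)_{t\in I}$ in a normed space, $\hat V^r(a_t)_{t\in I}=\sup_{t_0<t_1<\dots<t_J\in I}(\sum_{j=1}^J\|a_{t_j}-a_{t_{j-1}}\|^r)^{1/r}$, supremum over all $J$ and all increasing finite sequences in $I$. *)

(* Defs.v *)
From Stdlib Require Import Reals Lra.
Open Scope R_scope.

Record NormedSpace := {
  carrier :> Type;
  vzero : carrier;
  vadd : carrier -> carrier -> carrier;
  vopp : carrier -> carrier;
  vscal : R -> carrier -> carrier;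
  vnorm : carrier -> R;
  vadd_assoc : forall x y z, vadd x (vadd y z) = vadd (vadd x y) z;
  vadd_comm : forall x y, vadd x y = vadd y x;
  vadd_0 : forall x, vadd x vzero = x;
  vadd_opp : forall x, vadd x (vopp x) = vzero;
  vscal_1 : forall x, vscal 1 x = x;
  vscal_assoc : forall a b x, vscal a (vscal b x) = vscal (a * b) x;
  vscal_distr_v : forall a x y, vscal a (vadd x y) = vadd (vscal a x) (vscal a y);
  vscal_distr_s : forall a b x, vscal (a + b) x = vadd (vscal a x) (vscal b x);
  vnorm_eq0 : forall x, vnorm x = 0 -> x = vzero;
  vnorm_scal : forall a x, vnorm (vscal a x) = Rabs a * vnorm x;
  vnorm_triangle : forall x y, vnorm (vadd x y) <= vnorm x + vnorm y
}.

Arguments vzero {_}. Arguments vadd {_}. Arguments vopp {_}.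
Arguments vscal {_}. Arguments vnorm {_}.

Definition vsub {X : NormedSpace} (x y : X) : X := vadd x (vopp y).

(** Real power x^y for x >= 0, with 0^y = 0 for y <> 0 and 0^0 = 1
    (Stdlib's Rpower gives Rpower 0 y = 1, which is not wanted). *)
Definition rpow (x y : R) : R :=
  if Rlt_dec 0 x then Rpower x y else if Req_EM_T y 0 then 1 else 0.

Definition has_derivative_on {X : NormedSpace} (a a' : R -> X) (T : R) : Prop :=
  forall t, 0 <= t <= T -> forall eps, 0 < eps -> exists delta, 0 < delta /\
    forall s, 0 <= s <= T -> s <> t -> Rabs (s - t) < delta ->
      vnorm (vsub (vscal (/ (s - t)) (vsub (a s) (a t))) (a' t)) < eps.

Definition continuous_on {X : NormedSpace} (f : R -> X) (T : R) : Prop :=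
  forall t, 0 <= t <= T -> forall eps, 0 < eps -> exists delta, 0 < delta /\
    forall s, 0 <= s <= T -> Rabs (s - t) < delta -> vnorm (vsub (f s) (f t)) < eps.

Fixpoint fsum (f : nat -> R) (J : nat) : R :=
  match J with O => 0 | S k => fsum f k + f k end.

Definition rvar_sum {X : NormedSpace} (a : R -> X) (r : R) (t : nat -> R) (J : nat) : R :=
  rpow (fsum (fun j => rpow (vnorm (vsub (a (t (S j))) (a (t j)))) r) J) (/ r).

(** \hat V^r (a(t))_{t in [0,T]} <= C, i.e. the supremum over all finite
    increasing sequences t_0 < ... < t_J in [0,T] is at most C. *)
Definition Vhat_le {X : NormedSpace} (a : R -> X) (r T C : R) : Prop :=
  forall (J : nat) (t : nat -> R),
    0 <= t O -> t J <= T -> (forall j, (j < J)%nat -> t j < t (S j)) ->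
    rvar_sum a r t J <= C.

(* Main.v *)
From Coquelicot Require Import Coquelicot.
Require Import Defs.
From Stdlib Require Import Reals Lra Lia.
Open Scope R_scope.

Lemma vscal0 (X : NormedSpace) (x : X) : vscal 0 x = vzero.
Proof.
  assert (H : vscal 0 x = vadd (vscal 0 x) (vscal 0 x)).
  { rewrite <- vscal_distr_s. f_equal. ring. }
  assert (H2 : vadd (vscal 0 x) (vopp (vscal 0 x)) =
               vadd (vadd (vscal 0 x) (vscal 0 x)) (vopp (vscal 0 x))) by (rewrite <- H; reflexivity).
  rewrite <- vadd_assoc, !vadd_opp, vadd_0 in H2. auto.
Qed.

Lemma vopp_scal (X : NormedSpace) (x : X) : vopp x = vscal (-1) x.
Proof.
  assert (H : vadd x (vscal (-1) x) = vzero).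
  { rewrite <- (vscal_1 _ x) at 1. rewrite <- vscal_distr_s.
    replace (1 + -1) with 0 by ring. apply vscal0. }
  transitivity (vadd (vopp x) (vadd x (vscal (-1) x))).
  - rewrite H, vadd_0. auto.
  - rewrite vadd_assoc, (vadd_comm _ (vopp x)), vadd_opp, vadd_comm, vadd_0. auto.
Qed.

Lemma vnorm_opp (X : NormedSpace) (x : X) : vnorm (vopp x) = vnorm x.
Proof. rewrite vopp_scal, vnorm_scal. replace (Rabs (-1)) with 1. ring. unfold Rabs; destruct Rcase_abs; lra. Qed.

Lemma vnorm_zero (X : NormedSpace) : vnorm (@vzero X) = 0.
Proof. rewrite <- (vscal0 X vzero), vnorm_scal, Rabs_R0. ring. Qed.

Lemma vnorm_ge0 (X : NormedSpace) (x : X) : 0 <= vnorm x.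
Proof.
  pose proof (vnorm_triangle X x (vopp x)). rewrite vadd_opp, vnorm_zero, vnorm_opp in H. lra.
Qed.

Lemma vsub_split (X : NormedSpace) (x y z : X) : vsub x z = vadd (vsub x y) (vsub y z).
Proof.
  unfold vsub. rewrite <- vadd_assoc. f_equal.
  rewrite vadd_assoc, (vadd_comm _ (vopp y) y), vadd_opp, vadd_comm, vadd_0. auto.
Qed.

Lemma vnorm_sub_tri (X : NormedSpace) (x y z : X) :
  vnorm (vsub x z) <= vnorm (vsub x y) + vnorm (vsub y z).
Proof. rewrite (vsub_split X x y z). apply vnorm_triangle. Qed.

Lemma vsub_opp (X : NormedSpace) (x y : X) : vnorm (vsub x y) = vnorm (vsub y x).
Proof.
  unfold vsub. rewrite <- vnorm_opp. f_equal.
  rewrite !vopp_scal, vscal_distr_v, vscal_assoc. replace (-1 * -1) with 1 by ring.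
  rewrite vscal_1, vadd_comm. auto.
Qed.

Lemma vsub_self (X : NormedSpace) (x : X) : vsub x x = vzero.
Proof. apply vadd_opp. Qed.

Lemma vsub_zero (X : NormedSpace) (x : X) : vsub x vzero = x.
Proof. pose proof (vadd_opp X vzero) as H. rewrite vadd_comm, vadd_0 in H. unfold vsub. rewrite H, vadd_0. auto. Qed.

Lemma vnorm_rev (X : NormedSpace) (x y : X) : Rabs (vnorm x - vnorm y) <= vnorm (vsub x y).
Proof.
  pose proof (vnorm_sub_tri X x y vzero). pose proof (vnorm_sub_tri X y x vzero).
  rewrite !vsub_zero in *. rewrite (vsub_opp X y x) in H0. apply Rabs_le; lra.
Qed.

Lemma deriv_bound (X : NormedSpace) (a a' : R -> X) (s t eps : R) :
  s <> t ->
  vnorm (vsub (vscal (/ (s - t)) (vsub (a s) (a t))) (a' t)) < eps ->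
  vnorm (vsub (a s) (a t)) <= Rabs (s - t) * (vnorm (a' t) + eps).
Proof.
  intros Hst H.
  set (w := vscal (/ (s - t)) (vsub (a s) (a t))) in *.
  assert (E : vsub (a s) (a t) = vscal (s - t) w).
  { unfold w. rewrite vscal_assoc, Rinv_r by lra. now rewrite vscal_1. }
  assert (E2 : w = vadd (vsub w (a' t)) (a' t)).
  { unfold vsub. rewrite <- vadd_assoc, (vadd_comm _ (vopp _)), vadd_opp, vadd_0. auto. }
  rewrite E, vnorm_scal. apply Rmult_le_compat_l. apply Rabs_pos.
  rewrite E2. eapply Rle_trans. apply vnorm_triangle. lra.
Qed.

Definition ctn_on (F : R -> R) (p q : R) : Prop :=
  forall t, p <= t <= q -> forall e, 0 < e -> exists d, 0 < d /\
    forall x, p <= x <= q -> Rabs (x - t) < d -> Rabs (F x - F t) < e.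

Lemma lub_lt (E : R -> Prop) (m x : R) : is_lub E m -> x < m -> exists t, E t /\ x < t.
Proof.
  intros [Hub Hl] Hx. destruct (Classical_Prop.classic (exists t, E t /\ x < t)) as [H|H]; auto.
  exfalso. assert (m <= x). { apply Hl. intros t Ht. destruct (Rle_dec t x); auto.
  exfalso; apply H; exists t; split; auto; lra. } lra.
Qed.

Lemma gmvi_core (u v : R) (D : R -> R) :
  u <= v -> ctn_on D u v ->
  (forall t, u <= t < v -> exists d, 0 < d /\ forall s, t < s < t + d -> s <= v -> D s <= D t) ->
  D v <= D u.
Proof.
  intros Huv Hc Hloc.
  apply Rle_plus_epsilon. intros e He.
  set (E := fun t => u <= t <= v /\ forall x, u <= x <= t -> D x <= D u + e).
  assert (Hb : bound E). { exists v. intros t [Ht _]. lra. }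
  assert (Hu : E u). { split. lra. intros x Hx. replace x with u by lra. lra. }
  destruct (completeness E Hb (ex_intro _ u Hu)) as [m Hm].
  assert (Hm1 : u <= m) by (apply Hm; auto).
  assert (Hm2 : m <= v). { apply Hm. intros t [Ht _]. lra. }
  assert (HA : forall x, u <= x < m -> D x <= D u + e).
  { intros x Hx. destruct (lub_lt E m x Hm ltac:(lra)) as [t [[Ht1 Ht2] Ht3]].
    apply Ht2. lra. }
  assert (HB : D m <= D u + e).
  { destruct (Req_dec m u) as [Heq|Hne]. { rewrite Heq; lra. }
    destruct (Rle_dec (D m) (D u + e)) as [|Hn]; auto. exfalso.
    destruct (Hc m ltac:(lra) (D m - D u - e) ltac:(lra)) as [d [Hd Hd2]].
    set (x := Rmax u (m - d/2)).
    assert (Hx1 : u <= x < m). { unfold x. unfold Rmax. destruct Rle_dec; lra. }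
    assert (Hx2 : Rabs (x - m) < d). { unfold x, Rmax. destruct Rle_dec; apply Rabs_def1; lra. }
    specialize (Hd2 x ltac:(lra) Hx2). apply Rabs_def2 in Hd2.
    specialize (HA x Hx1). lra. }
  assert (HC : m = v).
  { destruct (Req_dec m v) as [|Hne]; auto. exfalso.
    destruct (Hloc m ltac:(lra)) as [d [Hd Hd2]].
    set (s := Rmin (m + d/2) v).
    assert (Hs : m < s <= v). { unfold s, Rmin. destruct Rle_dec; lra. }
    assert (Es : E s).
    { split. lra. intros x Hx. destruct (Rlt_le_dec x m). apply HA; lra.
      destruct (Req_dec x m) as [->|]. auto.
      assert (D x <= D m). { apply Hd2. split. lra. unfold s, Rmin in Hx. destruct Rle_dec in Hx; lra. lra. }
      lra. }
    assert (s <= m) by (apply Hm; auto). lra. }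
  rewrite <- HC. lra.
Qed.

Lemma select_right (F : R -> R) (p q c : R) :
  p < q -> ctn_on F p q -> F p <= c -> c < F q ->
  exists w, p <= w < q /\ F w <= c /\ forall x, w < x <= q -> c < F x.
Proof.
  intros Hpq Hc Hp Hq.
  set (E := fun t => p <= t <= q /\ F t <= c).
  assert (Hb : bound E). { exists q. intros t [Ht _]. lra. }
  assert (Hu : E p). { split. lra. auto. }
  destruct (completeness E Hb (ex_intro _ p Hu)) as [w Hw].
  assert (Hw1 : p <= w) by (apply Hw; auto).
  assert (Hw2 : w <= q). { apply Hw. intros t [Ht _]. lra. }
  assert (HB : F w <= c).
  { destruct (Req_dec w p) as [Heq|Hne]. { rewrite Heq; lra. }
    destruct (Rle_dec (F w) c) as [|Hn]; auto. exfalso.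
    destruct (Hc w ltac:(lra) (F w - c) ltac:(lra)) as [d [Hd Hd2]].
    destruct (lub_lt E w (w - d) Hw ltac:(lra)) as [t [[Ht1 Ht2] Ht3]].
    assert (t <= w) by (apply Hw; split; auto).
    specialize (Hd2 t ltac:(lra) ltac:(apply Rabs_def1; lra)). apply Rabs_def2 in Hd2. lra. }
  assert (w <> q) by (intro; subst; lra).
  exists w. split. lra. split. auto.
  intros x Hx. destruct (Rlt_le_dec c (F x)); auto.
  assert (x <= w) by (apply Hw; split; auto; lra). lra.
Qed.

Lemma select_left (F : R -> R) (p q c : R) :
  p < q -> ctn_on F p q -> F q <= c -> c < F p ->
  exists w, p < w <= q /\ F w <= c /\ forall x, p <= x < w -> c < F x.
Proof.
  intros Hpq Hc Hp Hq.
  destruct (select_right (fun t => F (- t)) (-q) (-p) c) as [w [H1 [H2 H3]]].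
  - lra.
  - intros t Ht e He. destruct (Hc (-t) ltac:(lra) e He) as [d [Hd Hd2]].
    exists d. split; auto. intros x Hx Hxd. apply Hd2. lra.
    replace (- x - - t) with (- (x - t)) by ring. rewrite Rabs_Ropp; auto.
  - rewrite Ropp_involutive; auto.
  - rewrite Ropp_involutive; auto.
  - exists (- w). split. lra. split. auto. intros x Hx.
    specialize (H3 (- x) ltac:(lra)). rewrite Ropp_involutive in H3. auto.
Qed.

Lemma rpow_pos (x y : R) : 0 < x -> rpow x y = exp (y * ln x).
Proof. intros H. unfold rpow. destruct Rlt_dec; [reflexivity|lra]. Qed.

Lemma rpow_0l (y : R) : y <> 0 -> rpow 0 y = 0.
Proof. intros H. unfold rpow. destruct Rlt_dec; [lra|]. destruct Req_EM_T; [lra|auto]. Qed.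

Lemma rpow_ge0 (x y : R) : 0 <= rpow x y.
Proof. unfold rpow. destruct Rlt_dec. unfold Rpower. left; apply exp_pos.
  destruct Req_EM_T; lra. Qed.

Lemma rpow_x0 (x : R) : rpow x 0 = 1.
Proof. unfold rpow. destruct Rlt_dec. unfold Rpower. rewrite Rmult_0_l, exp_0; auto.
  destruct Req_EM_T; lra. Qed.

Lemma rpow_x1 (x : R) : 0 <= x -> rpow x 1 = x.
Proof. intros H. destruct (Req_dec x 0) as [->|]. apply rpow_0l; lra.
  rewrite rpow_pos by lra. rewrite Rmult_1_l, exp_ln; lra. Qed.

Lemma rpow_pos_lt (x y : R) : 0 < x -> 0 < rpow x y.
Proof. intros H. rewrite rpow_pos by auto. apply exp_pos. Qed.

Lemma rpow_le (x y z : R) : 0 <= x <= y -> 0 < z -> rpow x z <= rpow y z.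
Proof.
  intros Hxy Hz. destruct (Req_dec x 0) as [->|Hx].
  - rewrite rpow_0l by lra. apply rpow_ge0.
  - rewrite !rpow_pos by lra. destruct (Req_dec x y) as [->|]. lra.
    left. apply exp_increasing. apply Rmult_lt_compat_l; auto. apply ln_increasing; lra.
Qed.

Lemma exp_convex (al s t : R) : 0 <= al <= 1 ->
  exp (al * s + (1 - al) * t) <= al * exp s + (1 - al) * exp t.
Proof.
  intros Hal. set (m := al * s + (1 - al) * t).
  assert (Hs : exp m * (1 + (s - m)) <= exp s).
  { replace (exp s) with (exp m * exp (s - m)) by (rewrite <- exp_plus; f_equal; ring).
    apply Rmult_le_compat_l. left; apply exp_pos. apply exp_ineq1_le. }
  assert (Ht : exp m * (1 + (t - m)) <= exp t).
  { replace (exp t) with (exp m * exp (t - m)) by (rewrite <- exp_plus; f_equal; ring).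
    apply Rmult_le_compat_l. left; apply exp_pos. apply exp_ineq1_le. }
  assert (E : exp m = al * (exp m * (1 + (s - m))) + (1 - al) * (exp m * (1 + (t - m))))
    by (unfold m; ring).
  rewrite E at 1. apply Rplus_le_compat; apply Rmult_le_compat_l; lra.
Qed.

Lemma young_pt (r mu c g : R) : 1 <= r -> 0 < mu -> 0 <= c -> 0 <= g ->
  rpow c (r - 1) * g <= (1 - / r) * mu * rpow c r + / r * rpow mu (1 - r) * rpow g r.
Proof.
  intros Hr Hmu Hc Hg.
  assert (Hr0 : 0 < / r) by (apply Rinv_0_lt_compat; lra).
  assert (Hr1 : / r <= 1) by (rewrite <- Rinv_1; apply Rinv_le_contravar; lra).
  assert (P1 := rpow_ge0 c r). assert (P2 := rpow_ge0 mu (1 - r)). assert (P3 := rpow_ge0 g r).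
  assert (N : 0 <= (1 - / r) * mu * rpow c r + / r * rpow mu (1 - r) * rpow g r).
  { apply Rplus_le_le_0_compat; repeat apply Rmult_le_pos; lra. }
  destruct (Req_dec r 1) as [->|Hr1'].
  { replace (1 - 1) with 0 by ring. rewrite !rpow_x0, (rpow_x1 g) by auto. rewrite Rinv_1. lra. }
  destruct (Req_dec c 0) as [->|Hc0].
  { rewrite rpow_0l by lra. lra. }
  destruct (Req_dec g 0) as [->|Hg0].
  { lra. }
  rewrite !rpow_pos by lra.
  replace g with (exp (ln g)) at 1 by (apply exp_ln; lra).
  rewrite <- exp_plus.
  replace ((1 - / r) * mu * exp (r * ln c)) with ((1 - / r) * exp (ln mu + r * ln c))
    by (rewrite exp_plus, exp_ln by lra; ring).
  replace (/ r * exp ((1 - r) * ln mu) * exp (r * ln g)) with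
    (/ r * exp ((1 - r) * ln mu + r * ln g)) by (rewrite exp_plus; ring).
  replace ((r - 1) * ln c + ln g) with
    ((1 - / r) * (ln mu + r * ln c) + (1 - (1 - / r)) * ((1 - r) * ln mu + r * ln g))
    by (field; lra).
  pose proof (exp_convex (1 - / r) (ln mu + r * ln c) ((1 - r) * ln mu + r * ln g) ltac:(lra)) as HH.
  replace (1 - (1 - / r)) with (/ r) in * by ring. lra.
Qed.

Lemma eps_to_cont (f : R -> R) (x : R) :
  (forall e, 0 < e -> exists d, 0 < d /\ forall y, Rabs (y - x) < d -> Rabs (f y - f x) < e) ->
  continuous f x.
Proof.
  intros H. apply continuity_pt_filterlim.
  unfold continuity_pt, continue_in, limit1_in, limit_in. simpl. unfold R_dist.
  intros e He. destruct (H e He) as [d [Hd H2]]. exists d. split; auto.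
  intros y [_ Hy]. apply H2; auto.
Qed.

Lemma cont_to_eps (f : R -> R) (x : R) : continuous f x ->
  forall e, 0 < e -> exists d, 0 < d /\ forall y, Rabs (y - x) < d -> Rabs (f y - f x) < e.
Proof.
  intros H. apply continuity_pt_filterlim in H.
  unfold continuity_pt, continue_in, limit1_in, limit_in in H. simpl in H. unfold R_dist in H.
  intros e He. destruct (H e He) as [d [Hd H2]]. exists d. split; auto.
  intros y Hy. destruct (Req_dec y x) as [->|Hne].
  - rewrite Rminus_diag, Rabs_R0; auto.
  - apply H2. split; [split; [exact I| intro E; apply Hne; symmetry; exact E] | exact Hy].
Qed.

Definition clamp (T x : R) : R := Rmax 0 (Rmin T x).

Lemma clamp_id (T x : R) : 0 <= x <= T -> clamp T x = x.
Proof. intros H. unfold clamp, Rmax, Rmin. repeat destruct Rle_dec; lra. Qed.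

Lemma clamp_in (T x : R) : 0 <= T -> 0 <= clamp T x <= T.
Proof. intros H. unfold clamp, Rmax, Rmin. repeat destruct Rle_dec; lra. Qed.

Lemma clamp_lip (T x y : R) : 0 <= T -> Rabs (clamp T x - clamp T y) <= Rabs (x - y).
Proof. intros H. unfold clamp, Rmax, Rmin. repeat destruct Rle_dec; unfold Rabs; repeat destruct Rcase_abs; lra. Qed.

Lemma ctn_on_sub (F H : R -> R) p q : ctn_on F p q -> ctn_on H p q -> ctn_on (fun x => F x - H x) p q.
Proof.
  intros HF HH t Ht e He. destruct (HF t Ht (e/2) ltac:(lra)) as [d1 [Hd1 H1]].
  destruct (HH t Ht (e/2) ltac:(lra)) as [d2 [Hd2 H2]].
  exists (Rmin d1 d2). split. apply Rmin_pos; auto. intros x Hx Hxt.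
  specialize (H1 x Hx ltac:(eapply Rlt_le_trans; [apply Hxt|apply Rmin_l])).
  specialize (H2 x Hx ltac:(eapply Rlt_le_trans; [apply Hxt|apply Rmin_r])).
  apply Rabs_def2 in H1, H2. apply Rabs_def1; lra.
Qed.

Lemma ctn_on_lin (k : R) p q : ctn_on (fun x => k * x) p q.
Proof.
  intros t Ht e He. exists (e / (Rabs k + 1)). split.
  apply Rdiv_lt_0_compat; auto. pose proof (Rabs_pos k); lra.
  intros x Hx Hxt. replace (k * x - k * t) with (k * (x - t)) by ring.
  rewrite Rabs_mult. pose proof (Rabs_pos k). pose proof (Rabs_pos (x - t)).
  apply Rle_lt_trans with ((Rabs k + 1) * Rabs (x - t)). nra.
  apply (Rmult_lt_compat_l (Rabs k + 1)) in Hxt; [|lra].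
  replace ((Rabs k + 1) * (e / (Rabs k + 1))) with e in Hxt by (field; lra). auto.
Qed.

Lemma ctn_on_mono (F : R -> R) p q p' q' : p <= p' -> q' <= q -> ctn_on F p q -> ctn_on F p' q'.
Proof. intros H1 H2 H t Ht e He. destruct (H t ltac:(lra) e He) as [d [Hd Hd2]].
  exists d. split; auto. intros x Hx. apply Hd2. lra. Qed.


Lemma a_lip (X : NormedSpace) (a a' : R -> X) (T : R) (hder : has_derivative_on a a' T) :
  forall t, 0 <= t <= T -> exists d, 0 < d /\ forall s, 0 <= s <= T -> Rabs (s - t) < d ->
    vnorm (vsub (a s) (a t)) <= Rabs (s - t) * (vnorm (a' t) + 1).
Proof.
  intros t Ht. destruct (hder t Ht 1 Rlt_0_1) as [d [Hd H]]. exists d. split; auto.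
  intros s Hs Hst. destruct (Req_dec s t) as [->|Hne].
  - rewrite vsub_self, vnorm_zero. pose proof (vnorm_ge0 _ (a' t)). pose proof (Rabs_pos (t - t)). nra.
  - apply deriv_bound; auto.
Qed.

Lemma a_close (X : NormedSpace) (a a' : R -> X) (T : R) (hder : has_derivative_on a a' T) :
  forall t, 0 <= t <= T -> forall e, 0 < e -> exists d, 0 < d /\ forall x, 0 <= x <= T ->
    Rabs (x - t) < d -> vnorm (vsub (a x) (a t)) < e.
Proof.
  intros t Ht e He. destruct (a_lip X a a' T hder t Ht) as [d [Hd H]].
  pose proof (vnorm_ge0 _ (a' t)).
  exists (Rmin d (e / (vnorm (a' t) + 1))). split.
  apply Rmin_pos; auto. apply Rdiv_lt_0_compat; lra.
  intros x Hx Hxt. eapply Rle_lt_trans. apply H; auto.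
  eapply Rlt_le_trans; [apply Hxt|apply Rmin_l].
  assert (Rabs (x - t) < e / (vnorm (a' t) + 1)) by (eapply Rlt_le_trans; [apply Hxt|apply Rmin_r]).
  apply (Rmult_lt_compat_r (vnorm (a' t) + 1)) in H1; [|lra].
  replace (e / (vnorm (a' t) + 1) * (vnorm (a' t) + 1)) with e in H1 by (field; lra). auto.
Qed.

Lemma N_ctn (X : NormedSpace) (a a' : R -> X) (T u : R) (hder : has_derivative_on a a' T) :
  ctn_on (fun x => vnorm (vsub (a x) (a u))) 0 T.
Proof.
  intros t Ht e He. destruct (a_close X a a' T hder t Ht e He) as [d [Hd H]].
  exists d. split; auto. intros x Hx Hxt. specialize (H x Hx Hxt).
  pose proof (vnorm_sub_tri X (a x) (a t) (a u)). pose proof (vnorm_sub_tri X (a t) (a x) (a u)).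
  rewrite (vsub_opp X (a t) (a x)) in H1. apply Rabs_def1; lra.
Qed.

Lemma f_ctn (X : NormedSpace) (a a' : R -> X) (T : R) (hder : has_derivative_on a a' T) :
  ctn_on (fun x => vnorm (a x)) 0 T.
Proof.
  intros t Ht e He. destruct (a_close X a a' T hder t Ht e He) as [d [Hd H]].
  exists d. split; auto. intros x Hx Hxt. specialize (H x Hx Hxt).
  eapply Rle_lt_trans. apply vnorm_rev. auto.
Qed.

Lemma G_cont (X : NormedSpace) (a' : R -> X) (T K : R) (hT : 0 < T) (hcont : continuous_on a' T) :
  forall x, continuous (fun y => K * vnorm (a' (clamp T y))) x.
Proof.
  intros x. apply eps_to_cont. intros e He.
  destruct (hcont (clamp T x) (clamp_in T x ltac:(lra)) (e / (Rabs K + 1))) as [d [Hd H]].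
  { apply Rdiv_lt_0_compat; auto. pose proof (Rabs_pos K); lra. }
  exists d. split; auto. intros y Hy.
  assert (Hc : Rabs (clamp T y - clamp T x) < d) by (eapply Rle_lt_trans; [apply clamp_lip; lra|auto]).
  specialize (H (clamp T y) (clamp_in T y ltac:(lra)) Hc).
  replace (K * vnorm (a' (clamp T y)) - K * vnorm (a' (clamp T x))) with
    (K * (vnorm (a' (clamp T y)) - vnorm (a' (clamp T x)))) by ring.
  rewrite Rabs_mult. pose proof (vnorm_rev X (a' (clamp T y)) (a' (clamp T x))).
  pose proof (Rabs_pos K). pose proof (Rabs_pos (vnorm (a' (clamp T y)) - vnorm (a' (clamp T x)))).
  apply Rlt_le_trans with ((Rabs K + 1) * (e / (Rabs K + 1))).
  2: { right. field. lra. }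
  apply Rle_lt_trans with ((Rabs K + 1) * Rabs (vnorm (a' (clamp T y)) - vnorm (a' (clamp T x)))). nra.
  apply Rmult_lt_compat_l; lra.
Qed.

Lemma ctn_on_scal (F : R -> R) k p q : ctn_on F p q -> ctn_on (fun x => k * F x) p q.
Proof.
  intros HF t Ht e He. destruct (HF t Ht (e / (Rabs k + 1))) as [d [Hd H]].
  { apply Rdiv_lt_0_compat; auto. pose proof (Rabs_pos k); lra. }
  exists d. split; auto. intros x Hx Hxt. specialize (H x Hx Hxt).
  replace (k * F x - k * F t) with (k * (F x - F t)) by ring. rewrite Rabs_mult.
  pose proof (Rabs_pos k). pose proof (Rabs_pos (F x - F t)).
  apply Rlt_le_trans with ((Rabs k + 1) * (e / (Rabs k + 1))).
  2: { right. field. lra. }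
  apply Rle_lt_trans with ((Rabs k + 1) * Rabs (F x - F t)). nra.
  apply Rmult_lt_compat_l; lra.
Qed.

Lemma RInt_ctn (G : R -> R) (Gc : forall x, continuous G x) (u p q : R) :
  ctn_on (fun x => RInt G u x) p q.
Proof.
  intros t Ht e He.
  assert (C : continuous (fun x => RInt G u x) t).
  { apply (@ex_derive_continuous R_AbsRing R_NormedModule). exists (G t).
    apply (is_derive_RInt G (fun x => RInt G u x) u t).
    - apply filter_forall. intros b. apply (@RInt_correct R_CompleteNormedModule). apply ex_RInt_continuous. intros; apply Gc.
    - apply Gc. }
  destruct (cont_to_eps _ _ C e He) as [d [Hd H]]. exists d. split; auto.
Qed.

Lemma ex_RInt_G (G : R -> R) (Gc : forall x, continuous G x) (p q : R) : ex_RInt G p q.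
Proof. apply (@ex_RInt_continuous R_CompleteNormedModule). intros; apply Gc. Qed.

Lemma RInt_lower_const (G : R -> R) (Gc : forall x, continuous G x) (t s c : R) :
  t <= s -> (forall x, t < x < s -> c <= G x) -> (s - t) * c <= RInt G t s.
Proof.
  intros Hts H. replace ((s - t) * c) with (RInt (fun _ => c) t s).
  apply RInt_le; auto. apply ex_RInt_const. apply ex_RInt_G; auto.
  rewrite RInt_const. reflexivity.
Qed.

Lemma RInt_chasles_G (G : R -> R) (Gc : forall x, continuous G x) (p q s : R) :
  RInt G p q + RInt G q s = RInt G p s.
Proof. apply (RInt_Chasles G p q s); apply ex_RInt_G; auto. Qed.

Lemma mvi (X : NormedSpace) (a a' : R -> X) (T : R) (hT : 0 < T)
  (hder : has_derivative_on a a' T) (hcont : continuous_on a' T) (u v K : R) :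
  0 <= u -> u <= v -> v <= T -> 0 <= K ->
  K * vnorm (vsub (a v) (a u)) <= RInt (fun x => K * vnorm (a' (clamp T x))) u v.
Proof.
  intros Hu Huv HvT HK.
  set (G := fun x => K * vnorm (a' (clamp T x))).
  assert (Gc : forall x, continuous G x) by (apply G_cont; auto).
  apply Rle_plus_epsilon. intros eps Heps.
  set (e' := eps / (v - u + 1)).
  assert (He' : 0 < e') by (apply Rdiv_lt_0_compat; lra).
  assert (He'2 : e' * (v - u) <= eps).
  { apply Rle_trans with (e' * (v - u + 1)).
    apply Rmult_le_compat_l; lra. unfold e'; right; field; lra. }
  set (D := fun t => K * vnorm (vsub (a t) (a u)) - RInt G u t - e' * t).
  assert (HD : D v <= D u).
  { apply gmvi_core; auto.
    - unfold D. apply (ctn_on_sub (fun t => K * vnorm (vsub (a t) (a u)) - RInt G u t) (fun t => e' * t)).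
      apply (ctn_on_sub (fun t => K * vnorm (vsub (a t) (a u))) (fun t => RInt G u t)).
      apply ctn_on_scal. apply (ctn_on_mono _ 0 T); auto. eapply N_ctn; eauto.
      apply RInt_ctn; auto. apply ctn_on_lin.
    - intros t Ht. assert (Ht0 : 0 <= t <= T) by lra.
      set (eps1 := e' / (2 * (K + 1))).
      assert (He1 : 0 < eps1) by (apply Rdiv_lt_0_compat; lra).
      assert (HK1 : K * eps1 <= e' / 2).
      { apply Rle_trans with ((K + 1) * eps1).
        apply Rmult_le_compat_r; lra. unfold eps1; right; field; lra. }
      destruct (hder t Ht0 eps1 He1) as [d1 [Hd1 H1]].
      destruct (cont_to_eps G t (Gc t) (e' / 2) ltac:(lra)) as [d2 [Hd2 H2]].
      exists (Rmin d1 d2). split. apply Rmin_pos; auto.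
      intros s Hs Hsv.
      assert (Hsd1 : s - t < d1) by (pose proof (Rmin_l d1 d2); lra).
      assert (Hsd2 : s - t < d2) by (pose proof (Rmin_r d1 d2); lra).
      assert (Hb := deriv_bound X a a' s t eps1 ltac:(lra)
                      (H1 s ltac:(lra) ltac:(lra) ltac:(rewrite Rabs_right; lra))).
      rewrite Rabs_right in Hb by lra.
      assert (Htri := vnorm_sub_tri X (a s) (a t) (a u)).
      assert (HGt : G t = K * vnorm (a' t)) by (unfold G; rewrite clamp_id; auto).
      assert (Hlow : (s - t) * (G t - e' / 2) <= RInt G t s).
      { apply RInt_lower_const; auto. lra. intros x Hx.
        specialize (H2 x ltac:(rewrite Rabs_right; lra)). apply Rabs_def2 in H2. lra. }
      assert (Hch := RInt_chasles_G G Gc u t s).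
      assert (Hprod : K * vnorm (vsub (a s) (a t)) <= (s - t) * (K * vnorm (a' t)) + (s - t) * (K * eps1)).
      { apply Rle_trans with (K * ((s - t) * (vnorm (a' t) + eps1))).
        apply Rmult_le_compat_l; auto. right; ring. }
      assert (Hp2 : (s - t) * (K * eps1) <= (s - t) * (e' / 2)) by (apply Rmult_le_compat_l; lra).
      assert (HKt : K * vnorm (vsub (a s) (a u)) <= K * vnorm (vsub (a s) (a t)) + K * vnorm (vsub (a t) (a u))).
      { rewrite <- Rmult_plus_distr_l. apply Rmult_le_compat_l; auto. }
      unfold D. rewrite HGt in Hlow.
      assert (E1 : (s - t) * (K * vnorm (a' t) - e' / 2) = (s - t) * (K * vnorm (a' t)) - (s - t) * (e' / 2)) by ring.
      rewrite E1 in Hlow. nra. }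
  unfold D in HD. rewrite RInt_point in HD. change (zero : R) with 0 in HD.
  rewrite vsub_self, vnorm_zero in HD. lra.
Qed.


Lemma ex_sub (h : R -> R) (T p q : R) : ex_RInt h 0 T -> 0 <= p <= q -> q <= T -> ex_RInt h p q.
Proof.
  intros H Hp Hq. apply (ex_RInt_Chasles_1 h p q T). lra.
  apply (ex_RInt_Chasles_2 h 0 p T). lra. auto.
Qed.

Lemma chasles3 (h : R -> R) (T p q s : R) : ex_RInt h 0 T -> 0 <= p -> p <= q -> q <= s -> s <= T ->
  RInt h p q + RInt h q s = RInt h p s.
Proof. intros H H1 H2 H3 H4. apply (RInt_Chasles h p q s); apply (ex_sub h T); auto; lra. Qed.

Lemma RInt_nonneg (h : R -> R) (T p q : R) : ex_RInt h 0 T -> (forall x, 0 <= h x) ->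
  0 <= p -> p <= q -> q <= T -> 0 <= RInt h p q.
Proof. intros H Hp H1 H2 H3. apply RInt_ge_0; auto. apply (ex_sub h T); auto. Qed.

Lemma RInt_mono_int (h : R -> R) (T p q p' q' : R) : ex_RInt h 0 T -> (forall x, 0 <= h x) ->
  0 <= p -> p <= p' -> p' <= q' -> q' <= q -> q <= T -> RInt h p' q' <= RInt h p q.
Proof.
  intros H Hp H1 H2 H3 H4 H5.
  rewrite <- (chasles3 h T p p' q) by (auto; lra).
  rewrite <- (chasles3 h T p' q' q) by (auto; lra).
  pose proof (RInt_nonneg h T p p' H Hp ltac:(lra) ltac:(lra) ltac:(lra)).
  pose proof (RInt_nonneg h T q' q H Hp ltac:(lra) ltac:(lra) ltac:(lra)). lra.
Qed.

Definition hfun (X : NormedSpace) (a a' : R -> X) (r mu : R) (x : R) : R :=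
  (1 - / r) * mu * rpow (vnorm (a x)) r + / r * rpow mu (1 - r) * rpow (vnorm (a' x)) r.

Lemma hfun_ge0 X a a' r mu x : 1 <= r -> 0 < mu -> 0 <= hfun X a a' r mu x.
Proof.
  intros Hr Hmu. unfold hfun.
  assert (Hr0 : 0 < / r) by (apply Rinv_0_lt_compat; lra).
  assert (Hr1 : / r <= 1) by (rewrite <- Rinv_1; apply Rinv_le_contravar; lra).
  pose proof (rpow_ge0 (vnorm (a x)) r). pose proof (rpow_ge0 mu (1 - r)).
  pose proof (rpow_ge0 (vnorm (a' x)) r).
  apply Rplus_le_le_0_compat; repeat apply Rmult_le_pos; lra.
Qed.

Lemma core_lemma (X : NormedSpace) (a a' : R -> X) (T r mu : R) (hT : 0 < T)
  (hder : has_derivative_on a a' T) (hcont : continuous_on a' T) (hr : 1 <= r) (hmu : 0 < mu)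
  (Hex : ex_RInt (hfun X a a' r mu) 0 T) (u v c : R) :
  0 <= u -> u <= v -> v <= T -> 0 <= c -> (forall x, u < x < v -> c <= vnorm (a x)) ->
  rpow c (r - 1) * vnorm (vsub (a v) (a u)) <= RInt (hfun X a a' r mu) u v.
Proof.
  intros Hu Huv Hv Hc Hf.
  apply Rle_trans with (RInt (fun x => rpow c (r - 1) * vnorm (a' (clamp T x))) u v).
  apply mvi; auto. apply rpow_ge0.
  apply RInt_le; auto.
  apply ex_RInt_G. apply G_cont; auto.
  apply (ex_sub _ T); auto.
  intros x Hx. rewrite clamp_id by lra. unfold hfun.
  apply Rle_trans with ((1 - / r) * mu * rpow c r + / r * rpow mu (1 - r) * rpow (vnorm (a' x)) r).
  apply young_pt; auto. apply vnorm_ge0.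
  apply Rplus_le_compat_r. apply Rmult_le_compat_l.
  apply Rmult_le_pos; [|lra].
  assert (/ r <= 1) by (rewrite <- Rinv_1; apply Rinv_le_contravar; lra). lra.
  apply rpow_le. split; auto. lra.
Qed.

Lemma rpow_mult_pos (x y r : R) : 0 < x -> 0 < y -> rpow (x * y) r = rpow x r * rpow y r.
Proof.
  intros Hx Hy. rewrite !rpow_pos by (try apply Rmult_lt_0_compat; auto).
  rewrite ln_mult by auto. rewrite <- exp_plus. f_equal; ring.
Qed.

Lemma rpow_split (c r : R) : 0 < c -> rpow c r = rpow c (r - 1) * c.
Proof.
  intros Hc. rewrite !rpow_pos by auto. replace c with (exp (ln c)) at 3 by (apply exp_ln; auto).
  rewrite <- exp_plus. f_equal; ring.
Qed.

Lemma per_interval (X : NormedSpace) (a a' : R -> X) (T r mu : R) (hT : 0 < T)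
  (hder : has_derivative_on a a' T) (hcont : continuous_on a' T) (hr : 1 <= r) (hmu : 0 < mu)
  (Hex : ex_RInt (hfun X a a' r mu) 0 T) (s0 s1 : R) :
  0 <= s0 -> s0 < s1 -> s1 <= T ->
  rpow (vnorm (vsub (a s1) (a s0))) r <= rpow 4 r * RInt (hfun X a a' r mu) s0 s1.
Proof.
  intros H0 H01 H1.
  set (h := hfun X a a' r mu).
  assert (hpos : forall x, 0 <= h x) by (intros; apply hfun_ge0; auto).
  assert (Hmono : forall p q, s0 <= p -> p <= q -> q <= s1 -> RInt h p q <= RInt h s0 s1).
  { intros p q Hp Hpq Hq. apply (RInt_mono_int h T); auto; lra. }
  assert (P4 : 0 < rpow 4 r) by (apply rpow_pos_lt; lra).
  set (D := vnorm (vsub (a s1) (a s0))).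
  assert (HD0 : 0 <= D) by apply vnorm_ge0.
  destruct (Req_dec D 0) as [HD|HD].
  { rewrite HD, rpow_0l by lra. apply Rmult_le_pos. lra. apply (RInt_nonneg h T); auto; lra. }
  set (c := D / 4).
  assert (Hc : 0 < c) by (unfold c; lra).
  assert (HDc : D = 4 * c) by (unfold c; field).
  assert (HDr : rpow D r = rpow 4 r * (rpow c (r - 1) * c)).
  { rewrite HDc, rpow_mult_pos by lra. rewrite (rpow_split c r) by auto. auto. }
  assert (Pc : 0 <= rpow c (r - 1)) by apply rpow_ge0.
  rewrite HDr. apply Rmult_le_compat_l. lra.
  assert (Hf := f_ctn X a a' T hder).
  destruct (Classical_Prop.classic (exists x, s0 < x < s1 /\ vnorm (a x) < c)) as [[x [Hx Hfx]]|Hno].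
  -
    assert (Htri := vnorm_sub_tri X (a s1) vzero (a s0)).
    rewrite vsub_zero, (vsub_opp X vzero (a s0)), vsub_zero in Htri. fold D in Htri.
    destruct (Rle_dec (2 * c) (vnorm (a s1))) as [Hs1|Hs1].
    + destruct (select_right (fun y => vnorm (a y)) x s1 c ltac:(lra)
         ltac:(apply (ctn_on_mono _ 0 T); auto; lra) ltac:(simpl; lra) ltac:(simpl; lra))
        as [w [Hw1 [Hw2 Hw3]]].
      simpl in Hw2, Hw3.
      assert (Hcore := core_lemma X a a' T r mu hT hder hcont hr hmu Hex w s1 c
                        ltac:(lra) ltac:(lra) ltac:(lra) ltac:(lra)
                        ltac:(intros y Hy; left; apply Hw3; lra)).
      assert (Hrev := vnorm_rev X (a s1) (a w)).
      assert (Hge : c <= vnorm (vsub (a s1) (a w))) by (pose proof (Rle_abs (vnorm (a s1) - vnorm (a w))); lra).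
      apply Rle_trans with (rpow c (r - 1) * vnorm (vsub (a s1) (a w))).
      apply Rmult_le_compat_l; auto.
      eapply Rle_trans. apply Hcore. apply Hmono; lra.
    + assert (Hs0 : 2 * c <= vnorm (a s0)) by lra.
      destruct (select_left (fun y => vnorm (a y)) s0 x c ltac:(lra)
         ltac:(apply (ctn_on_mono _ 0 T); auto; lra) ltac:(simpl; lra) ltac:(simpl; lra))
        as [w [Hw1 [Hw2 Hw3]]].
      simpl in Hw2, Hw3.
      assert (Hcore := core_lemma X a a' T r mu hT hder hcont hr hmu Hex s0 w c
                        ltac:(lra) ltac:(lra) ltac:(lra) ltac:(lra)
                        ltac:(intros y Hy; left; apply Hw3; lra)).
      assert (Hrev := vnorm_rev X (a s0) (a w)).
      rewrite (vsub_opp X (a s0) (a w)) in Hrev.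
      assert (Hge : c <= vnorm (vsub (a w) (a s0))) by (pose proof (Rle_abs (vnorm (a s0) - vnorm (a w))); lra).
      apply Rle_trans with (rpow c (r - 1) * vnorm (vsub (a w) (a s0))).
      apply Rmult_le_compat_l; auto.
      eapply Rle_trans. apply Hcore. apply Hmono; lra.
  -
    assert (Hcore := core_lemma X a a' T r mu hT hder hcont hr hmu Hex s0 s1 c
                        ltac:(lra) ltac:(lra) ltac:(lra) ltac:(lra)
                        ltac:(intros y Hy; destruct (Rle_dec c (vnorm (a y))); auto;
                              exfalso; apply Hno; exists y; split; auto; lra)).
    fold h D in Hcore.
    apply Rle_trans with (rpow c (r - 1) * D). apply Rmult_le_compat_l; auto. lra. auto.
Qed.


Lemma seq_mono (t : nat -> R) (J : nat) : (forall j, (j < J)%nat -> t j < t (S j)) ->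
  forall i k, (i <= k)%nat -> (k <= J)%nat -> t i <= t k.
Proof.
  intros H i k Hik. induction Hik as [|k Hik IH]; intros HkJ. lra.
  specialize (IH ltac:(lia)). specialize (H k ltac:(lia)). lra.
Qed.

Lemma fsum_ge0 (f : nat -> R) J : (forall j, 0 <= f j) -> 0 <= fsum f J.
Proof. intros H. induction J; simpl. lra. specialize (H J). lra. Qed.

Lemma sum_bound (X : NormedSpace) (a a' : R -> X) (T r mu : R) (hT : 0 < T)
  (hder : has_derivative_on a a' T) (hcont : continuous_on a' T) (hr : 1 <= r) (hmu : 0 < mu)
  (Hex : ex_RInt (hfun X a a' r mu) 0 T) (J : nat) (t : nat -> R) :
  0 <= t O -> t J <= T -> (forall j, (j < J)%nat -> t j < t (S j)) ->
  fsum (fun j => rpow (vnorm (vsub (a (t (S j))) (a (t j)))) r) J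
    <= rpow 4 r * RInt (hfun X a a' r mu) 0 T.
Proof.
  intros H0 HJ Hinc.
  set (h := hfun X a a' r mu).
  assert (hpos : forall x, 0 <= h x) by (intros; apply hfun_ge0; auto).
  assert (P4 : 0 < rpow 4 r) by (apply rpow_pos_lt; lra).
  assert (Hm := seq_mono t J Hinc).
  assert (Hk : forall k, (k <= J)%nat ->
     fsum (fun j => rpow (vnorm (vsub (a (t (S j))) (a (t j)))) r) k <= rpow 4 r * RInt h (t O) (t k)).
  { induction k; intros HkJ; simpl.
    - rewrite RInt_point. change (zero : R) with 0. lra.
    - specialize (IHk ltac:(lia)).
      assert (Hpi := per_interval X a a' T r mu hT hder hcont hr hmu Hex (t k) (t (S k))).
      assert (A1 := Hm O k ltac:(lia) ltac:(lia)). assert (A2 := Hm (S k) J ltac:(lia) ltac:(lia)).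
      assert (A3 := Hinc k ltac:(lia)).
      specialize (Hpi ltac:(lra) A3 ltac:(lra)). fold h in Hpi.
      rewrite <- (chasles3 h T (t O) (t k) (t (S k))) by (auto; lra). lra. }
  eapply Rle_trans. apply Hk. lia.
  apply Rmult_le_compat_l. lra.
  apply (RInt_mono_int h T); auto. lra. apply Hm; lia. lra.
Qed.


Lemma rpow_rpow (x y z : R) : 0 < x -> rpow (rpow x y) z = rpow x (y * z).
Proof.
  intros Hx. rewrite (rpow_pos x y) by auto. rewrite rpow_pos by apply exp_pos.
  rewrite rpow_pos by auto. rewrite ln_exp. f_equal; ring.
Qed.

Lemma rpow_exp (L y : R) : rpow (exp L) y = exp (y * L).
Proof. rewrite rpow_pos by apply exp_pos. rewrite ln_exp. auto. Qed.

Lemma hint_value (X : NormedSpace) (a a' : R -> X) (T r mu : R)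
  (pa : Riemann_integrable (fun t => rpow (vnorm (a t)) r) 0 T)
  (pa' : Riemann_integrable (fun t => rpow (vnorm (a' t)) r) 0 T) :
  ex_RInt (hfun X a a' r mu) 0 T /\
  RInt (hfun X a a' r mu) 0 T = (1 - / r) * mu * RiemannInt pa + / r * rpow mu (1 - r) * RiemannInt pa'.
Proof.
  assert (E1 := ex_RInt_Reals_1 _ _ _ pa). assert (E2 := ex_RInt_Reals_1 _ _ _ pa').
  assert (E1' := ex_RInt_scal _ _ _ ((1 - / r) * mu) E1).
  assert (E2' := ex_RInt_scal _ _ _ (/ r * rpow mu (1 - r)) E2).
  split.
  - exact (ex_RInt_plus _ _ _ _ E1' E2').
  - rewrite <- (RInt_Reals _ _ _ pa), <- (RInt_Reals _ _ _ pa').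
    unfold hfun. etransitivity.
    exact (RInt_plus (fun x => scal ((1 - / r) * mu) (rpow (vnorm (a x)) r))
                     (fun x => scal (/ r * rpow mu (1 - r)) (rpow (vnorm (a' x)) r)) 0 T E1' E2').
    rewrite (RInt_scal (fun x => rpow (vnorm (a x)) r)) by auto.
    rewrite (RInt_scal (fun x => rpow (vnorm (a' x)) r)) by auto. reflexivity.
Qed.

Theorem lemmaB1 (X : NormedSpace) (r T : R) (a a' : R -> X)
  (hr : 1 <= r) (hT : 0 < T)
  (hder : has_derivative_on a a' T) (hcont : continuous_on a' T)
  (pa : Riemann_integrable (fun t => rpow (vnorm (a t)) r) 0 T)
  (pa' : Riemann_integrable (fun t => rpow (vnorm (a' t)) r) 0 T) :
  Vhat_le a r T
    (8 * rpow (rpow (RiemannInt pa) (/ r)) (1 - / r)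
       * rpow (rpow (RiemannInt pa') (/ r)) (/ r)).
Proof.
  intros J t H0 HJ Hinc. unfold rvar_sum.
  set (Ssum := fsum (fun j => rpow (vnorm (vsub (a (t (S j))) (a (t j)))) r) J).
  set (A := RiemannInt pa). set (B := RiemannInt pa').
  assert (HA : 0 <= A).
  { unfold A. rewrite <- RInt_Reals. apply RInt_ge_0. lra. apply ex_RInt_Reals_1; exact pa.
    intros; apply rpow_ge0. }
  assert (HB : 0 <= B).
  { unfold B. rewrite <- RInt_Reals. apply RInt_ge_0. lra. apply ex_RInt_Reals_1; exact pa'.
    intros; apply rpow_ge0. }
  assert (HS : 0 <= Ssum) by (apply fsum_ge0; intros; apply rpow_ge0).
  assert (Hkey : forall mu, 0 < mu -> Ssum <= rpow 4 r * ((1 - / r) * mu * A + / r * rpow mu (1 - r) * B)).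
  { intros mu Hmu. destruct (hint_value X a a' T r mu pa pa') as [Hex Hv].
    fold A B in Hv. rewrite <- Hv. apply sum_bound; auto. }
  assert (Hr0 : 0 < / r) by (apply Rinv_0_lt_compat; lra).
  assert (P4 : 0 < rpow 4 r) by (apply rpow_pos_lt; lra).
  destruct (Req_dec r 1) as [Hr1|Hr1].
  {
    specialize (Hkey 1 Rlt_0_1). rewrite Hr1 in *. rewrite Rinv_1 in *.
    replace (1 - 1) with 0 in * by ring. rewrite rpow_x0, rpow_x1 in Hkey by lra.
    rewrite (rpow_x1 Ssum HS), rpow_x0, !(rpow_x1 B HB). lra. }
  assert (Hr1' : 1 < r) by lra.
  assert (Hr2 : / r < 1) by (rewrite <- Rinv_1; apply Rinv_lt_contravar; lra).
  destruct (Req_dec A 0) as [HA0|HA0].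
  {
    assert (Ssum <= 0).
    { destruct (Rle_dec Ssum 0) as [|HSn]; auto. exfalso.
      set (K := rpow 4 r * / r * B + 1).
      assert (HK : 0 < K) by (unfold K; pose proof (Rmult_le_pos (rpow 4 r * / r) B ltac:(nra) HB); lra).
      set (m := ln (Ssum / K) / (1 - r)).
      specialize (Hkey (exp m) (exp_pos m)). rewrite HA0, rpow_exp in Hkey.
      replace ((1 - r) * m) with (ln (Ssum / K)) in Hkey by (unfold m; field; lra).
      rewrite exp_ln in Hkey by (apply Rdiv_lt_0_compat; lra).
      assert (E : rpow 4 r * ((1 - / r) * exp m * 0 + / r * (Ssum / K) * B) = Ssum * ((rpow 4 r * / r * B) / K))
        by (field; lra).
      rewrite E in Hkey.
      assert ((rpow 4 r * / r * B) / K < 1).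
      { apply (Rmult_lt_reg_r K); auto. unfold Rdiv. rewrite Rmult_assoc, Rinv_l by lra. unfold K; lra. }
      nra. }
    assert (HS0 : Ssum = 0) by lra. rewrite HS0. rewrite rpow_0l by lra. rewrite HA0, (rpow_0l (/ r)) by lra.
    rewrite rpow_0l by lra. rewrite Rmult_0_r, Rmult_0_l. lra. }
  destruct (Req_dec B 0) as [HB0|HB0].
  {
    assert (Ssum <= 0).
    { destruct (Rle_dec Ssum 0) as [|HSn]; auto. exfalso.
      set (K := rpow 4 r * (1 - / r) * A + 1).
      assert (HK : 0 < K) by (unfold K; pose proof (Rmult_le_pos (rpow 4 r * (1 - / r)) A ltac:(nra) HA); lra).
      set (mu := Ssum / K).
      assert (Hmu : 0 < mu) by (apply Rdiv_lt_0_compat; lra).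
      specialize (Hkey mu Hmu). rewrite HB0 in Hkey.
      assert (E : rpow 4 r * ((1 - / r) * mu * A + / r * rpow mu (1 - r) * 0) = Ssum * ((rpow 4 r * (1 - / r) * A) / K))
        by (unfold mu; field; lra).
      rewrite E in Hkey.
      assert ((rpow 4 r * (1 - / r) * A) / K < 1).
      { apply (Rmult_lt_reg_r K); auto. unfold Rdiv. rewrite Rmult_assoc, Rinv_l by lra. unfold K; lra. }
      nra. }
    assert (HS0 : Ssum = 0) by lra. rewrite HS0. rewrite rpow_0l by lra. rewrite HB0, (rpow_0l (/ r)) by lra.
    rewrite rpow_0l by lra. rewrite Rmult_0_r. lra. }
  assert (HAp : 0 < A) by lra. assert (HBp : 0 < B) by lra.
  set (m := (ln B - ln A) / r).
  specialize (Hkey (exp m) (exp_pos m)). rewrite rpow_exp in Hkey.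
  assert (E : (1 - / r) * exp m * A + / r * exp ((1 - r) * m) * B = exp (m + ln A)).
  { assert (E1 : exp m * A = exp (m + ln A)) by (rewrite exp_plus, exp_ln; auto).
    assert (E2 : exp ((1 - r) * m) * B = exp (m + ln A)).
    { replace (m + ln A) with ((1 - r) * m + ln B) by (unfold m; field; lra).
      rewrite exp_plus, exp_ln; auto. }
    replace ((1 - / r) * exp m * A) with ((1 - / r) * (exp m * A)) by ring.
    replace (/ r * exp ((1 - r) * m) * B) with (/ r * (exp ((1 - r) * m) * B)) by ring.
    rewrite E1, E2. ring. }
  rewrite E in Hkey.
  eapply Rle_trans. apply rpow_le. split. auto. apply Hkey. auto.
  rewrite rpow_mult_pos by (auto; apply exp_pos).
  rewrite rpow_rpow by lra. replace (r * / r) with 1 by (field; lra). rewrite rpow_x1 by lra.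
  rewrite rpow_exp. rewrite (rpow_rpow A), (rpow_rpow B) by auto. rewrite (rpow_pos A), (rpow_pos B) by auto.
  rewrite Rmult_assoc, <- exp_plus.
  replace (/ r * (m + ln A)) with (/ r * (1 - / r) * ln A + / r * / r * ln B) by (unfold m; field; lra).
  pose proof (exp_pos (/ r * (1 - / r) * ln A + / r * / r * ln B)). lra.
Qed.
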